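(* As a symmetric set-operad, $\mathrm{RW}$ is generated by the three trees $A_\prec$, $A_\mu$, $A_\odot$.
   Context: Red and white trees: $\mathrm{RW}(n)$ is the set of finite rooted trees (children unordered) whose nodes $z$ carry possibly empty label sets $L(z)\subseteq[n]$ partitioning $[n]$, each empty node having at least two children; labelled nodes are white, an empty node is red iff all its children are white. $S_n$ acts by relabelling. Composition $T_1\circ_xT_2$ ($T_1\in\mathrm{RW}(m)$, $T_2\in\mathrm{RW}(n)$): relabel $T_1$ by $y\mapsto y+n-1$ for $y>x$ and $T_2$ by $y\mapsto y+x-1$; $z\ni x$ in $T_1$, $r$ = root of $T_2$. (W) $r$ not red: remove $x$ from $L(z)$, add $L(r)$ to $L(z)$, children of $r$ become children of $z$. (R1) $r$ red, $T_1$ the single node $\{x\}$: result $T_2$. (R2) $r$ red and ($z$ has a child or $|L(z)|\ge2$): remove $x$ from $L(z)$, attach $T_2$ as child subtree of $z$. (R3) $r$ red, $z$ non-root leaf with $L(z)=\{x\}$: delete $z$, children of $r$ become children of the parent of $z$. Colours recomputed. With these compositions and actions $\mathrm{RW}$ is a symmetric set-operad. $A_\mu$ = single node $\{1,2\}$; $A_\prec$ = root $\{1\}$ with child $\{2\}$; $A_\odot$ = empty red root with children $\{1\},\{2\}$. *)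

(* Defs.v *)
From mathcomp Require Import all_boot.
From Stdlib Require Import Permutation.
Set Implicit Arguments. Unset Strict Implicit. Unset Printing Implicit Defensive.

(* A tree node carries its label set L(z) (a list of labels, 1-based) and
   its list of children; children are unordered, labels form a set: both
   orders are quotiented out by [teq] below. *)
Inductive rwtree : Type := Node : seq nat -> seq rwtree -> rwtree.

Definition node_labels (T : rwtree) : seq nat := let: Node L _ := T in L.
Definition node_children (T : rwtree) : seq rwtree := let: Node _ cs := T in cs.

Fixpoint labels (T : rwtree) : seq nat :=
  let: Node L cs := T in L ++ flatten (map labels cs).

Fixpoint wf_empty (T : rwtree) : bool :=
  let: Node L cs := T in ((L != [::]) || (1 < size cs)) && all wf_empty cs.

Definition is_rw (n : nat) (T : rwtree) : bool :=
  perm_eq (labels T) (iota 1 n) && wf_empty T.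

Inductive teq : rwtree -> rwtree -> Prop :=
| teq_node : forall L L' cs cs' ds,
    perm_eq L L' -> Permutation cs ds -> List.Forall2 teq ds cs' ->
    teq (Node L cs) (Node L' cs').

Fixpoint relabel (f : nat -> nat) (T : rwtree) : rwtree :=
  let: Node L cs := T in Node (map f L) (map (relabel f) cs).

(* white = labelled; red = empty with all children white *)
Definition is_red (T : rwtree) : bool :=
  let: Node L cs := T in (L == [::]) && all (fun c => node_labels c != [::]) cs.

(* rule (W): at the node z containing x *)
Fixpoint insertW (x : nat) (Lr : seq nat) (cr : seq rwtree) (T : rwtree) : rwtree :=
  let: Node L cs := T in
  if x \in L then Node (rem x L ++ Lr) (cs ++ cr)
  else Node L (map (insertW x Lr cr) cs).

(* rules (R2)/(R3), T1 not the single node {x} *)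
Fixpoint insertR (x : nat) (T2 : rwtree) (T : rwtree) : rwtree :=
  let: Node L cs := T in
  if x \in L then Node (rem x L) (cs ++ [:: T2])                 (* (R2) *)
  else Node L (flatten (map (fun c =>
         match c with
         | Node [:: y] [::] => if y == x then node_children T2     (* (R3) *)
                               else [:: insertR x T2 c]
         | _ => [:: insertR x T2 c]
         end) cs)).

(* T1 \circ_x T2, with T2 of arity n *)
Definition comp (n x : nat) (T1 T2 : rwtree) : rwtree :=
  let T1' := relabel (fun y => if x < y then y + n - 1 else y) T1 in
  let T2' := relabel (fun y => y + x - 1) T2 in
  if ~~ is_red T2' then insertW x (node_labels T2') (node_children T2') T1'
  else match T1' with
       | Node [:: y] [::] => if y == x then T2' else insertR x T2' T1'  (* (R1) *)
       | _ => insertR x T2' T1'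
       end.

(* action of a permutation of [n], given as the sequence s of images of 1..n *)
Definition act (s : seq nat) (T : rwtree) : rwtree :=
  relabel (fun y => nth 0 s y.-1) T.

Definition A_mu : rwtree := Node [:: 1; 2] [::].
Definition A_prec : rwtree := Node [:: 1] [:: Node [:: 2] [::]].
Definition A_odot : rwtree := Node [::] [:: Node [:: 1] [::]; Node [:: 2] [::]].
Definition unit_tree : rwtree := Node [:: 1] [::].

(* the symmetric suboperad generated by A_prec, A_mu, A_odot
   (on representatives; the statement compares up to [teq]) *)
Inductive Gen : nat -> rwtree -> Prop :=
| gen_unit : Gen 1 unit_tree
| gen_mu : Gen 2 A_mu
| gen_prec : Gen 2 A_prec
| gen_odot : Gen 2 A_odot
| gen_comp : forall m n x T1 T2, Gen m T1 -> Gen n T2 -> 1 <= x <= m ->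
    Gen (m + n - 1) (comp n x T1 T2)
| gen_act : forall n s T, Gen n T -> perm_eq s (iota 1 n) -> Gen n (act s T).

(* Main.v *)
Require Import Defs.
From mathcomp Require Import all_boot zify.
From Stdlib Require Import Permutation.
Require Import Defs.
Set Implicit Arguments. Unset Strict Implicit. Unset Printing Implicit Defensive.


Definition Fa (P : rwtree -> Prop) (cs : seq rwtree) := forall c, List.In c cs -> P c.

Lemma rwtree_ind' (P : rwtree -> Prop) :
  (forall L cs, Fa P cs -> P (Node L cs)) -> forall t, P t.
Proof.
move=> H; fix IH 1 => -[L cs]; apply: H.
exact: ((fix F cs : Fa P cs := match cs with
  | [::] => fun c (Hc : List.In c [::]) => match Hc with end
  | c' :: cs' => fun c Hc => match Hc with
       | or_introl E => eq_ind c' P (IH c') c E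
       | or_intror H' => F cs' c H' end end) cs).
Qed.

Lemma teq_ind' (P : rwtree -> rwtree -> Prop) :
  (forall L L' cs cs' ds, perm_eq L L' -> Permutation cs ds ->
     List.Forall2 (fun a b => teq a b /\ P a b) ds cs' -> P (Node L cs) (Node L' cs')) ->
  forall a b, teq a b -> P a b.
Proof.
move=> H; fix IH 3 => a b t; destruct t as [L L' cs cs' ds Hp Hperm HF].
apply: (H L L' cs cs' ds Hp Hperm).
exact: ((fix F ds cs' (HF : List.Forall2 teq ds cs') : List.Forall2 (fun a b => teq a b /\ P a b) ds cs' :=
  match HF with
  | List.Forall2_nil => List.Forall2_nil _
  | List.Forall2_cons x y l l' Hxy HF' => List.Forall2_cons _ _ (conj Hxy (IH x y Hxy)) (F l l' HF')
  end) ds cs' HF).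
Qed.

Lemma map_ext_In (A B : Type) (f g : A -> B) (s : seq A) :
  (forall a, List.In a s -> f a = g a) -> map f s = map g s.
Proof. elim: s => //= a s IH H; rewrite H /=; [congr (_ :: _); apply: IH => b Hb|]; by auto. Qed.

Lemma relabel_comp f g T : relabel f (relabel g T) = relabel (f \o g) T.
Proof.
elim/rwtree_ind': T => L cs IH /=; rewrite -map_comp; congr Node.
rewrite -map_comp; exact: map_ext_In.
Qed.

Lemma labels_relabel f T : labels (relabel f T) = map f (labels T).
Proof.
elim/rwtree_ind': T => L cs IH /=; rewrite map_cat; congr (_ ++ _).
elim: cs IH => //= c cs IHc H; rewrite map_cat H /= ?IHc //; [by move=> d Hd; apply: H; right|by left].
Qed.

Lemma eq_in_relabel f g T : {in labels T, f =1 g} -> relabel f T = relabel g T.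
Proof.
elim/rwtree_ind': T => L cs IH /= H; congr Node.
  by apply/eq_in_map => y Hy; apply: H; rewrite mem_cat Hy.
elim: cs IH H => //= c cs IHc IH H; congr (_ :: _).
  by apply: IH; [left|move=> y Hy; apply: H; rewrite !mem_cat Hy orbT].
apply: IHc; first by move=> d Hd; apply: IH; right.
by move=> y; rewrite !mem_cat => /orP[Hy|Hy]; apply: H; rewrite !mem_cat ?Hy ?orbT.
Qed.

Lemma is_red_relabel f T : is_red (relabel f T) = is_red T.
Proof.
case: T => L cs /=; congr andb; first by case: L.
by elim: cs => //= -[L' cs'] cs ->; case: L'.
Qed.


Definition lteq (xs ys : seq rwtree) := exists ds, Permutation xs ds /\ List.Forall2 teq ds ys.

Lemma teq_nodeE L L' cs cs' : teq (Node L cs) (Node L' cs') <-> perm_eq L L' /\ lteq cs cs'.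
Proof.
split; first by move=> H; inversion H; subst; split=> //; eexists; split; eauto.
by case=> Hp [ds [H1 H2]]; econstructor; eauto.
Qed.

Lemma Forall2_refl A (R : A -> A -> Prop) s : (forall a, List.In a s -> R a a) -> List.Forall2 R s s.
Proof. elim: s => //= a s IH H; constructor; auto. Qed.

Lemma teq_refl T : teq T T.
Proof.
elim/rwtree_ind': T => L cs IH; econstructor; [exact: seq.perm_refl| apply: Permutation_refl|].
exact: Forall2_refl.
Qed.

Lemma Forall2_flip A B (R : A -> B -> Prop) s t : List.Forall2 R s t -> List.Forall2 (fun b a => R a b) t s.
Proof. by elim=> //= *; constructor. Qed.

Lemma Forall2_impl A B (R R' : A -> B -> Prop) s t : (forall a b, R a b -> R' a b) ->
  List.Forall2 R s t -> List.Forall2 R' s t.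
Proof. by move=> H; elim=> //= *; constructor; auto. Qed.

Lemma Forall2_trans A B C (R : A -> B -> Prop) (R' : B -> C -> Prop) (R'' : A -> C -> Prop) s t u :
  (forall a b c, R a b -> R' b c -> R'' a c) ->
  List.Forall2 R s t -> List.Forall2 R' t u -> List.Forall2 R'' s u.
Proof.
move=> H F1; revert u; induction F1 as [|a b s' t' Hab F IH] => u0 F2; inversion F2; subst; constructor; eauto.
Qed.

Lemma teq_trans a b c : teq a b -> teq b c -> teq a c.
Proof.
move=> Hab; revert c; revert a b Hab.
refine (teq_ind' (P := fun a b => forall c, teq b c -> teq a c) _) => L L' cs cs' ds Hp Hperm HF c Hbc.
case: c Hbc => L'' cs'' /teq_nodeE [Hp' [es [Hperm' HF']]].
have [ds' [Hds Hds']] := Permutation_Forall2 Hperm' (Forall2_flip HF).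
apply/teq_nodeE; split; first exact: seq.perm_trans Hp Hp'.
exists ds'; split; first exact: Permutation_trans Hperm Hds.
apply: (Forall2_trans _ (Forall2_flip Hds') HF') => x y z [_ H] H'; exact: H.
Qed.

Lemma perm_flatten_Perm (g : rwtree -> seq nat) cs ds : Permutation cs ds ->
  perm_eq (flatten (map g cs)) (flatten (map g ds)).
Proof.
elim=> //= [x l l' _ H|x y l|l l' l'' _ H1 _ H2].
- by rewrite perm_cat2l.
- by rewrite perm_catCA.
- exact: seq.perm_trans H1 H2.
Qed.

Lemma perm_flatten_F2 (g : rwtree -> seq nat) cs ds : List.Forall2 (fun a b => perm_eq (g a) (g b)) cs ds ->
  perm_eq (flatten (map g cs)) (flatten (map g ds)).
Proof. by elim=> //= a b s t H _ IH; apply: perm_cat. Qed.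

Lemma teq_labels a b : teq a b -> perm_eq (labels a) (labels b).
Proof.
revert a b; refine (teq_ind' (P := fun a b => perm_eq (labels a) (labels b)) _) => L L' cs cs' ds Hp Hperm HF /=; apply: perm_cat => //.
apply: seq.perm_trans (perm_flatten_Perm labels Hperm) _.
apply: perm_flatten_F2; apply: Forall2_impl HF => x y []//.
Qed.

Lemma all_Perm (p : pred rwtree) cs ds : Permutation cs ds -> all p cs = all p ds.
Proof. elim=> //= [x l l' _ ->|x y l|l l' l'' _ -> _ ->] //; by rewrite andbCA. Qed.

Lemma all_F2 (p : pred rwtree) cs ds : List.Forall2 (fun a b => p a = p b) cs ds -> all p cs = all p ds.
Proof. by elim=> //= a b s t -> _ ->. Qed.

Lemma perm_nil (L : seq nat) L' : perm_eq L L' -> (L == [::]) = (L' == [::]).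
Proof. by move/perm_size; case: L; case: L'. Qed.

Lemma teq_is_red a b : teq a b -> is_red a = is_red b.
Proof.
case=> L L' cs cs' ds Hp Hperm HF /=; rewrite (perm_nil Hp); congr andb.
rewrite (all_Perm _ Hperm); apply: all_F2; apply: Forall2_impl HF.
by case=> [l1 c1] [l2 c2] /teq_nodeE [H _] /=; rewrite (perm_nil H).
Qed.

Lemma perm1 (y : nat) L : perm_eq [:: y] L -> L = [:: y].
Proof.
move=> H; have := perm_size H; case: L H => [|z [|//]] //= H _.
by move: (perm_mem H z); rewrite !inE eqxx => /eqP ->.
Qed.

Lemma teq_leafl y b : teq (Node [:: y] [::]) b -> b = Node [:: y] [::].
Proof.
case: b => L cs /teq_nodeE [/perm1 -> [ds [H1 H2]]].
by have E := Permutation_nil H1; subst; inversion H2.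
Qed.

Lemma perm1r (y : nat) L : perm_eq L [:: y] -> L = [:: y].
Proof. by rewrite perm_sym => /perm1. Qed.

Lemma teq_leafr y a : teq a (Node [:: y] [::]) -> a = Node [:: y] [::].
Proof.
case: a => L cs /teq_nodeE [/perm1r -> [ds [H1 H2]]].
by inversion H2; subst; rewrite (Permutation_nil (Permutation_sym H1)).
Qed.

Lemma lteq_app a b c d : lteq a b -> lteq c d -> lteq (a ++ c) (b ++ d).
Proof.
move=> [x [H1 H2]] [y [H3 H4]]; exists (x ++ y); split; first exact: Permutation_app.
exact: List.Forall2_app.
Qed.

Lemma lteq_refl a : lteq a a.
Proof. exists a; split; [exact: Permutation_refl| apply: Forall2_refl => *; exact: teq_refl]. Qed.

Lemma lteq_cons x y a b : teq x y -> lteq a b -> lteq (x :: a) (y :: b).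
Proof. by move=> H [ds [H1 H2]]; exists (x :: ds); split; [constructor|constructor]. Qed.


Definition OP (x : nat) (T1 T2 : rwtree) : rwtree :=
  if ~~ is_red T2 then insertW x (node_labels T2) (node_children T2) T1
  else match T1 with
       | Node [:: y] [::] => if y == x then T2 else insertR x T2 T1
       | _ => insertR x T2 T1
       end.

Lemma compE n x T1 T2 : comp n x T1 T2 =
  OP x (relabel (fun y => if x < y then y + n - 1 else y) T1) (relabel (fun y => y + x - 1) T2).
Proof. by []. Qed.

Definition leafl (c : rwtree) : option nat :=
  match c with Node [:: y] [::] => Some y | _ => None end.

Definition Fx x B (c : rwtree) :=
  match c with
  | Node [:: y] [::] => if y == x then node_children B else [:: insertR x B c]
  | _ => [:: insertR x B c]
  end.

Lemma FxE x B c : Fx x B c = if leafl c == Some x then node_children B else [:: insertR x B c].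
Proof. by case: c => [[|y [|z l]] [|d cs]] //=; rewrite (inj_eq (@Some_inj _)). Qed.

Lemma insertR_node x B L cs : insertR x B (Node L cs) =
  if x \in L then Node (rem x L) (cs ++ [:: B]) else Node L (flatten (map (Fx x B) cs)).
Proof. by []. Qed.

Lemma OP_red x A B : is_red B -> OP x A B = if leafl A == Some x then B else insertR x B A.
Proof.
rewrite /OP => ->; case: A => [[|y [|z l]] [|d cs]] //=.
Qed.

Lemma OP_nred x A B : ~~ is_red B -> OP x A B = insertW x (node_labels B) (node_children B) A.
Proof. by rewrite /OP => ->. Qed.

Lemma leafl_teq a b : teq a b -> leafl a = leafl b.
Proof.
move=> H; case Ea: (leafl a) => [y|].
  by case: a Ea H => [[|y' [|]] [|]] //= [->] /teq_leafl ->.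
case Eb: (leafl b) => [y|] //.
by case: b Eb H => [[|y' [|]] [|]] //= [->] /teq_leafr E; rewrite E in Ea.
Qed.

Lemma leafl_labels c y : leafl c = Some y -> c = Node [:: y] [::].
Proof. by case: c => [[|y' [|]] [|]] //= [->]. Qed.

Lemma perm_rem (x : nat) L L' : perm_eq L L' -> perm_eq (rem x L) (rem x L').
Proof.
move=> H; case Hx: (x \in L).
  have Hx' : x \in L' by rewrite -(perm_mem H).
  rewrite -(perm_cons x); apply: seq.perm_trans (seq.perm_trans _ H) (perm_to_rem Hx').
  by rewrite perm_sym; exact: perm_to_rem Hx.
have Hx' : x \notin L' by rewrite -(perm_mem H) Hx.
by rewrite !rem_id ?Hx.
Qed.

Lemma lteq_perm xs ys zs : Permutation xs ys -> lteq ys zs -> lteq xs zs.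
Proof. by move=> H [ds [H1 H2]]; exists ds; split=> //; apply: Permutation_trans H H1. Qed.

Lemma Perm_flatten A B (F : A -> seq B) xs ys : Permutation xs ys ->
  Permutation (flatten (map F xs)) (flatten (map F ys)).
Proof.
elim=> //= [x l l' _ H|x y l|l l' l'' _ H1 _ H2].
- exact: Permutation_app_head.
- by rewrite !catA; apply: Permutation_app_tail; apply: Permutation_app_comm.
- exact: Permutation_trans H1 H2.
Qed.

Lemma Perm_map A B (F : A -> B) xs ys : Permutation xs ys -> Permutation (map F xs) (map F ys).
Proof.
elim=> //= [x l l' _ H|x y l|l l' l'' _ H1 _ H2].
- by constructor.
- by constructor.
- exact: Permutation_trans H1 H2.
Qed.

Lemma lteq_flatten (F G : rwtree -> seq rwtree) ds cs : List.Forall2 (fun a b => lteq (F a) (G b)) ds cs ->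
  lteq (flatten (map F ds)) (flatten (map G cs)).
Proof. by elim=> /= [|a b s t H _ IH]; [exact: lteq_refl|apply: lteq_app]. Qed.

Lemma Forall2_map A B C D (F : A -> C) (G : B -> D) (R : C -> D -> Prop) s t :
  List.Forall2 (fun a b => R (F a) (G b)) s t -> List.Forall2 R (map F s) (map G t).
Proof. by elim=> //= *; constructor. Qed.

Lemma lteq_F2 cs cs' ds : Permutation cs ds -> List.Forall2 (fun a b => teq a b /\ True) ds cs' -> lteq cs cs'.
Proof. move=> H1 H2; exists ds; split=> //; apply: (Forall2_impl _ H2) => ? ? [] //. Qed.

Lemma insertW_teq x Lr Lr' cr cr' A A' : perm_eq Lr Lr' -> lteq cr cr' -> teq A A' ->
  teq (insertW x Lr cr A) (insertW x Lr' cr' A').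
Proof.
move=> HL Hc H; revert A A' H.
refine (teq_ind' (P := fun A A' => teq (insertW x Lr cr A) (insertW x Lr' cr' A')) _)
  => L L' cs cs' ds Hp Hperm HF /=.
rewrite -(perm_mem Hp); case: ifP => Hx; apply/teq_nodeE; split => //.
- by apply: perm_cat => //; exact: perm_rem.
- apply: lteq_app => //; exists ds; split=> //; apply: (Forall2_impl _ HF) => ? ? [] //.
- exists (map (insertW x Lr cr) ds); split; first exact: Perm_map.
  by apply: Forall2_map; apply: Forall2_impl HF => ? ? [] //.
Qed.

Lemma teq_children L cs L' cs' : teq (Node L cs) (Node L' cs') -> lteq cs cs'.
Proof. by case/teq_nodeE. Qed.

Lemma insertR_teq x B B' A A' : teq B B' -> teq A A' -> teq (insertR x B A) (insertR x B' A').
Proof.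
move=> HB H; revert A A' H.
refine (teq_ind' (P := fun A A' => teq (insertR x B A) (insertR x B' A')) _)
  => L L' cs cs' ds Hp Hperm HF.
rewrite !insertR_node -(perm_mem Hp); case: ifP => Hx; apply/teq_nodeE; split => //.
- exact: perm_rem.
- apply: lteq_app; first by exists ds; split=> //; apply: (Forall2_impl _ HF) => ? ? [] //.
  by apply: lteq_cons => //; apply: lteq_refl.
- apply: (lteq_perm (Perm_flatten _ Hperm)); apply: lteq_flatten.
  apply: Forall2_impl HF => a b [Hab IH]; rewrite !FxE (leafl_teq Hab).
  case: ifP => _; last by apply: lteq_cons => //; exact: lteq_refl.
  by clear IH; case: B B' HB => ? ? [? ?] /teq_children.
Qed.

Lemma OP_teq x A A' B B' : teq A A' -> teq B B' -> teq (OP x A B) (OP x A' B').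
Proof.
move=> HA HB; case R: (is_red B).
  rewrite !OP_red -?(teq_is_red HB) // (leafl_teq HA); case: ifP => // _.
  exact: insertR_teq.
rewrite !OP_nred -?(teq_is_red HB) ?R //.
by case: B B' HB {R} => ? ? [? ?] /teq_nodeE [H1 H2]; apply: insertW_teq.
Qed.


Lemma mem_map_in (f : nat -> nat) x s : {in x :: s &, injective f} -> (f x \in map f s) = (x \in s).
Proof.
move=> H; apply/mapP/idP => [[y Hy E]|Hx]; last by exists x.
by rewrite (H x y) // inE ?eqxx ?Hy ?orbT.
Qed.

Lemma map_rem_in (f : nat -> nat) x s : {in x :: s &, injective f} -> rem (f x) (map f s) = map f (rem x s).
Proof.
elim: s => //= y s IH H; case: (eqVneq y x) => [->|N]; first by rewrite eqxx.
have : f y != f x by apply/eqP => E; move/eqP: N; apply; apply: H; rewrite ?inE ?eqxx ?orbT.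
move/negbTE => ->; rewrite IH //; apply: sub_in2 H => z; rewrite !inE.
by case/orP=> ->; rewrite ?orbT.
Qed.

Lemma In_sub c cs : List.In c cs -> {subset labels c <= flatten (map labels cs)}.
Proof. elim: cs => //= d cs IH [<-|H] y Hy; rewrite mem_cat ?Hy // IH ?orbT //. Qed.

Lemma uniq_child c cs : uniq (flatten (map labels cs)) -> List.In c cs -> uniq (labels c).
Proof. elim: cs => //= d cs IH; rewrite cat_uniq => /and3P [H1 _ H3] [<-|H] //; exact: IH. Qed.

Lemma disj_child (x : nat) L cs c : uniq (L ++ flatten (map labels cs)) -> x \in L -> List.In c cs ->
  x \notin labels c.
Proof.
rewrite cat_uniq => /and3P [_ H _] Hx Hc; apply/negP => Hy.
by move/hasP: H; apply; exists x => //; exact: In_sub Hy.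
Qed.

Lemma inj_sub (f : nat -> nat) x s t : {subset t <= s} -> {in x :: s &, injective f} -> {in x :: t &, injective f}.
Proof.
move=> S H a b Ha Hb; apply: H; rewrite !inE in Ha Hb *;
by [case/orP: Ha => [->|/S ->]; rewrite ?orbT | case/orP: Hb => [->|/S ->]; rewrite ?orbT].
Qed.

Section Rel.
Variables (σ f g : nat -> nat) (x0 : nat).

Definition Hyps A0 := [/\ uniq (labels A0), {in x0 :: labels A0 &, injective σ},
  {in x0 :: labels A0 &, injective f} & {in labels A0, forall y, y != x0 -> g (σ y) = f y}].

Lemma Hyps_child L cs c : Hyps (Node L cs) -> List.In c cs -> Hyps c.
Proof.
case=> /= U I1 I2 E Hc; have S : {subset labels c <= L ++ flatten (map labels cs)}.
  by move=> y Hy; rewrite mem_cat (In_sub Hc Hy) orbT.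
split.
- by apply: uniq_child Hc; move: U; rewrite cat_uniq => /and3P [].
- exact: inj_sub I1.
- exact: inj_sub I2.
- by move=> y Hy; apply: E; apply: S.
Qed.

Lemma relabel_child L cs c : Hyps (Node L cs) -> x0 \in L -> List.In c cs ->
  relabel g (relabel σ c) = relabel f c.
Proof.
case=> U _ _ E Hx Hc; rewrite relabel_comp; apply: eq_in_relabel => y Hy /=.
apply: E; first by rewrite /= mem_cat (In_sub Hc Hy) orbT.
by apply/negP => /eqP Ey; subst y; move: (disj_child U Hx Hc); rewrite Hy.
Qed.

Lemma map_L L cs : Hyps (Node L cs) -> {in L, forall y, y != x0} -> map g (map σ L) = map f L.
Proof.
case=> _ _ _ E H; rewrite -map_comp; apply/eq_in_map => y Hy /=.
by apply: E; [rewrite /= mem_cat Hy | exact: H].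
Qed.

Lemma map_rem_L L cs : Hyps (Node L cs) -> x0 \in L ->
  map g (rem (σ x0) (map σ L)) = rem (f x0) (map f L).
Proof.
move=> Hy Hx; have [U I1 I2 _] := Hy.
have S : {subset L <= labels (Node L cs)} by move=> y Hy'; rewrite /= mem_cat Hy'.
rewrite (map_rem_in (inj_sub S I1)) (map_rem_in (inj_sub S I2)).
have := map_L (L := rem x0 L) (cs := cs); apply.
- case: Hy => U' I1' I2' E; split=> //.
  + move: U'; rewrite /= !cat_uniq => /and3P [U1 U2 U3]; apply/and3P; split => //.
    * exact: rem_uniq.
    * by apply: contra U2 => /hasP [z Hz Hz']; apply/hasP; exists z => //; exact: mem_rem Hz'.
  + by apply: inj_sub I1' => z; rewrite /= !mem_cat => /orP [/mem_rem ->|->]; rewrite ?orbT.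
  + by apply: inj_sub I2' => z; rewrite /= !mem_cat => /orP [/mem_rem ->|->]; rewrite ?orbT.
  + by move=> z; rewrite /= mem_cat => /orP [/mem_rem|] Hz; apply: E; rewrite /= mem_cat Hz ?orbT.
- move=> z Hz; apply/negP => /eqP Ez; subst z.
  have UL : uniq L by move: U; rewrite /= cat_uniq => /andP [].
  by rewrite mem_rem_uniqF in Hz.
Qed.

Lemma leafl_relabel (h : nat -> nat) c : leafl (relabel h c) = omap h (leafl c).
Proof. by case: c => [[|y [|z l]] [|d cs]]. Qed.

Lemma leafl_key (h : nat -> nat) c : {in x0 :: labels c &, injective h} ->
  (leafl (relabel h c) == Some (h x0)) = (leafl c == Some x0).
Proof.
move=> I; rewrite leafl_relabel; case E: (leafl c) => [y|] //=.
rewrite !(inj_eq (@Some_inj _)); apply/eqP/eqP => [E'|->] //.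
apply: I => //; rewrite !inE ?eqxx ?orbT //.
by rewrite (leafl_labels E) /= inE eqxx orbT.
Qed.

Lemma insertW_relabel Lr cr A0 : Hyps A0 ->
  relabel g (insertW (σ x0) Lr cr (relabel σ A0)) =
  insertW (f x0) (map g Lr) (map (relabel g) cr) (relabel f A0).
Proof.
elim/rwtree_ind': A0 => L cs IH Hy /=.
have [U I1 I2 E] := Hy.
have S : {subset L <= labels (Node L cs)} by move=> y Hy'; rewrite /= mem_cat Hy'.
rewrite (mem_map_in (inj_sub S I1)) (mem_map_in (inj_sub S I2)).
case: ifP => Hx /=.
  rewrite map_cat (map_rem_L Hy Hx) map_cat -map_comp; congr Node; congr (_ ++ _).
  by apply: map_ext_In => c Hc /=; exact: relabel_child Hy Hx Hc.
rewrite (map_L Hy); last by move=> y Hy'; apply/negP => /eqP E'; subst; rewrite Hy' in Hx.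
congr Node; rewrite -!map_comp; apply: map_ext_In => c Hc /=.
exact: IH c Hc (Hyps_child Hy Hc).
Qed.

Lemma insertR_relabel B A0 : Hyps A0 ->
  relabel g (insertR (σ x0) B (relabel σ A0)) = insertR (f x0) (relabel g B) (relabel f A0).
Proof.
elim/rwtree_ind': A0 => L cs IH Hy.
rewrite -[relabel σ (Node L cs)]/(Node (map σ L) (map (relabel σ) cs)).
rewrite -[relabel f (Node L cs)]/(Node (map f L) (map (relabel f) cs)) !insertR_node.
have [U I1 I2 E] := Hy.
have S : {subset L <= labels (Node L cs)} by move=> y Hy'; rewrite /= mem_cat Hy'.
rewrite (mem_map_in (inj_sub S I1)) (mem_map_in (inj_sub S I2)).
case: ifP => Hx /=.
  rewrite (map_rem_L Hy Hx) map_cat -map_comp; congr Node; congr (_ ++ _).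
  by apply: map_ext_In => c Hc /=; exact: relabel_child Hy Hx Hc.
rewrite (map_L Hy); last by move=> y Hy'; apply/negP => /eqP E'; subst; rewrite Hy' in Hx.
congr Node; rewrite map_flatten -!map_comp; congr flatten; apply: map_ext_In => c Hc /=.
have Hc' := Hyps_child Hy Hc; have [_ J1 J2 _] := Hc'.
rewrite !FxE (leafl_key J1) (leafl_key J2); case: ifP => _ /=.
  by case: (B).
by rewrite (IH c Hc Hc').
Qed.

Lemma OP_relabel B A0 : Hyps A0 ->
  relabel g (OP (σ x0) (relabel σ A0) B) = OP (f x0) (relabel f A0) (relabel g B).
Proof.
move=> Hy; have [U I1 I2 E] := Hy.
case R: (is_red B).
  rewrite !OP_red ?is_red_relabel // (leafl_key I1) (leafl_key I2).
  by case: ifP => // _; exact: insertR_relabel.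
rewrite !OP_nred ?is_red_relabel ?R // insertW_relabel //.
by case: (B).
Qed.
End Rel.


Lemma rem_cat (x : nat) s t : rem x (s ++ t) = if x \in s then rem x s ++ t else s ++ rem x t.
Proof.
elim: s => //= y s IH; rewrite inE; case: (eqVneq y x) => [->|N] /=; first by rewrite ?eqxx.
by rewrite IH; case: ifP.
Qed.

Lemma notin_child (x : nat) L cs c : x \notin labels (Node L cs) -> List.In c cs -> x \notin labels c.
Proof. move=> H Hc; apply: contra H => Hx; rewrite /= mem_cat (In_sub Hc Hx) orbT //. Qed.

Lemma insertW_id x Lr cr A : x \notin labels A -> insertW x Lr cr A = A.
Proof.
elim/rwtree_ind': A => L cs IH H /=.
have -> : (x \in L) = false by apply/negbTE; apply: contra H; rewrite /= mem_cat => ->.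
congr Node; rewrite -[RHS]map_id; apply: map_ext_In => c Hc; apply: IH => //.
exact: notin_child H Hc.
Qed.

Lemma flatten_single (cs : seq rwtree) : flatten (map (fun c => [:: c]) cs) = cs.
Proof. by elim: cs => //= c cs ->. Qed.

Lemma Fx_id x B c : x \notin labels c -> (forall B, insertR x B c = c) -> Fx x B c = [:: c].
Proof.
move=> H E; rewrite FxE E; case: ifP => // /eqP L; move: H.
by rewrite (leafl_labels L) /= inE eqxx.
Qed.

Lemma insertR_id x B A : x \notin labels A -> insertR x B A = A.
Proof.
elim/rwtree_ind': A B => L cs IH B H; rewrite insertR_node.
have -> : (x \in L) = false by apply/negbTE; apply: contra H; rewrite /= mem_cat => ->.
congr Node; rewrite -[RHS]flatten_single; congr flatten; apply: map_ext_In => c Hc.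
by apply: Fx_id; [exact: notin_child H Hc | move=> B'; apply: IH => //; exact: notin_child H Hc].
Qed.

Lemma insertW_labels x Lr cr A : uniq (labels A) -> x \in labels A ->
  perm_eq (labels (insertW x Lr cr A)) (rem x (labels A) ++ (Lr ++ flatten (map labels cr))).
Proof.
elim/rwtree_ind': A => L cs IH /= U Hx; rewrite rem_cat.
case: ifP => HL /=.
  rewrite map_cat flatten_cat -!catA perm_cat2l perm_catCA perm_cat2l //.
rewrite -catA perm_cat2l.
have {U} : uniq (flatten (map labels cs)) by move: U; rewrite cat_uniq => /and3P [].
have {Hx HL} : x \in flatten (map labels cs) by move: Hx; rewrite mem_cat HL.
elim: cs IH => //= c cs IHc IH Hx U.
move: U; rewrite cat_uniq => /and3P [Uc D Ucs].
rewrite rem_cat; case: ifP => Hxc.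
  have Hn : x \notin flatten (map labels cs) by apply: contra D => Hy; apply/hasP; exists x.
  have -> : map (insertW x Lr cr) cs = cs.
    rewrite -[RHS]map_id; apply: map_ext_In => d Hd; apply: insertW_id.
    by apply: contra Hn => Hy; apply: In_sub Hy.
  apply: seq.perm_trans (perm_cat (IH c (or_introl erefl) Uc Hxc) (seq.perm_refl _)) _.
  by rewrite -!catA perm_cat2l catA perm_catC.
rewrite insertW_id ?Hxc // -catA perm_cat2l; apply: IHc => //.
- by move=> d Hd; apply: IH; right.
- by move: Hx; rewrite mem_cat Hxc.
Qed.

Lemma insertR_labels x B A : uniq (labels A) -> x \in labels A -> node_labels B = [::] ->
  leafl A != Some x -> perm_eq (labels (insertR x B A)) (rem x (labels A) ++ labels B).
Proof.
elim/rwtree_ind': A => L cs IH U Hx HB HA; rewrite insertR_node /= rem_cat.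
case: ifP => HL /=.
  by rewrite map_cat flatten_cat /= cats0 catA.
rewrite -catA perm_cat2l.
have {U} : uniq (flatten (map labels cs)) by move: U; rewrite cat_uniq => /and3P [].
have {Hx HL HA} : x \in flatten (map labels cs) by move: Hx; rewrite mem_cat HL.
elim: cs IH => //= c cs IHc IH Hx U.
move: U; rewrite cat_uniq => /and3P [Uc D Ucs].
rewrite map_cat flatten_cat rem_cat; case: ifP => Hxc.
  have Hn : x \notin flatten (map labels cs) by apply: contra D => Hy; apply/hasP; exists x.
  have -> : flatten (map (Fx x B) cs) = cs.
    rewrite -[RHS]flatten_single; congr flatten; apply: map_ext_In => d Hd; apply: Fx_id.
      by apply: contra Hn => Hy; apply: In_sub Hy.
    by move=> B'; apply: insertR_id; apply: contra Hn => Hy; apply: In_sub Hy.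
  rewrite FxE; case: ifP => Hl.
    move/eqP: Hl => /leafl_labels Ec; subst c; rewrite /= eqxx /=.
    by move: HB; case: (B) => L' cs' /= ->; rewrite perm_catC.
  rewrite /= cats0.
  apply: seq.perm_trans (perm_cat (IH c (or_introl erefl) Uc Hxc HB (negbT Hl)) (seq.perm_refl _)) _.
  by rewrite -!catA perm_cat2l perm_catC.
rewrite Fx_id ?Hxc //; last by move=> B'; apply: insertR_id; rewrite Hxc.
rewrite /= cats0 -catA perm_cat2l; apply: IHc => //.
- by move=> d Hd; apply: IH; right.
- by move: Hx; rewrite mem_cat Hxc.
Qed.

Lemma labels_OP x A B : uniq (labels A) -> x \in labels A ->
  perm_eq (labels (OP x A B)) (rem x (labels A) ++ labels B).
Proof.
move=> U Hx; case R: (is_red B).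
  have HB : node_labels B = [::] by case: B R => [[|? ?] ?].
  rewrite OP_red //; case: ifP => Hl.
    by move/eqP: Hl => /leafl_labels ->; rewrite /= eqxx.
  exact: insertR_labels (negbT Hl).
rewrite OP_nred ?R //; apply: seq.perm_trans (insertW_labels _ _ U Hx) _.
by case: (B).
Qed.


Definition s1 n x := fun y => if x < y then y + n - 1 else y.
Definition s2 x := fun y => y + x - 1.

Lemma s1_inj n x : 0 < n -> injective (s1 n x).
Proof. by move=> Hn a b; rewrite /s1; case: (ltnP x a); case: (ltnP x b) => ? ? ?; lia. Qed.

Lemma mem_iota1 y m : (y \in iota 1 m) = (1 <= y <= m).
Proof. by rewrite mem_iota; lia. Qed.

Lemma comp_labels m n x U0 U1 : perm_eq (labels U0) (iota 1 m) -> perm_eq (labels U1) (iota 1 n) ->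
  0 < n -> 1 <= x <= m -> perm_eq (labels (comp n x U0 U1)) (iota 1 (m + n - 1)).
Proof.
move=> P0 P1 Hn Hx; rewrite compE.
have U : uniq (labels (relabel (s1 n x) U0)).
  by rewrite labels_relabel (map_inj_uniq (@s1_inj n x Hn)) (perm_uniq P0) iota_uniq.
have Mx : x \in labels (relabel (s1 n x) U0).
  rewrite labels_relabel; apply/mapP; exists x; last by rewrite /s1 ltnn.
  by rewrite (perm_mem P0) mem_iota1.
apply: seq.perm_trans (labels_OP _ U Mx) _.
rewrite !labels_relabel.
apply: seq.perm_trans (perm_cat (perm_rem x (perm_map (s1 n x) P0)) (perm_map (s2 x) P1)) _.
have E1 : iota 1 m = iota 1 (x - 1) ++ x :: iota (x + 1) (m - x).
  have -> : m = (x - 1) + (1 + (m - x)) by lia.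
  rewrite iotaD /= iotaD; congr (_ ++ _); rewrite /=; congr (_ :: _); [lia|congr iota; lia].
have E2 : map (s1 n x) (iota 1 m) = iota 1 (x - 1) ++ x :: iota (x + n) (m - x).
  rewrite E1 map_cat /=; congr (_ ++ _ :: _).
    rewrite -[RHS]map_id; apply/eq_in_map => y; rewrite mem_iota /s1 => Hy.
    by have -> : (x < y) = false by lia.
  by rewrite /s1 ltnn.
  have -> : x + n = (n - 1) + (x + 1) by lia.
  rewrite [in RHS]iotaDl; apply/eq_in_map => y; rewrite mem_iota /s1 => Hy.
  have -> : (x < y) = true by lia.
  lia.
have E3 : map (s2 x) (iota 1 n) = iota x n.
  have -> : x = (x - 1) + 1 by lia.
  rewrite iotaDl; apply/eq_in_map => y; rewrite mem_iota /s2 => Hy; lia.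
have E4 : iota 1 (m + n - 1) = iota 1 (x - 1) ++ iota x n ++ iota (x + n) (m - x).
  have -> : m + n - 1 = (x - 1) + (n + (m - x)) by lia.
  rewrite iotaD iotaD; congr (_ ++ iota _ _ ++ iota _ _); lia.
rewrite E2 E3 E4 rem_cat.
have -> : (x \in iota 1 (x - 1)) = false by rewrite mem_iota; lia.
rewrite /= eqxx -!catA perm_cat2l perm_catC //.
Qed.

Lemma comp_step m n x U0 U1 T0 T1 f0 f1 :
  Gen m U0 -> perm_eq (labels U0) (iota 1 m) -> Gen n U1 -> perm_eq (labels U1) (iota 1 n) ->
  0 < n -> {in labels U0 &, injective f0} -> x \in labels U0 ->
  teq T0 (relabel f0 U0) -> teq T1 (relabel f1 U1) ->
  exists g, [/\ Gen (m + n - 1) (comp n x U0 U1),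
     perm_eq (labels (comp n x U0 U1)) (iota 1 (m + n - 1)) &
     teq (OP (f0 x) T0 T1) (relabel g (comp n x U0 U1))].
Proof.
move=> G0 P0 G1 P1 Hn I0 Mx H0 H1.
have Hx : 1 <= x <= m by rewrite -mem_iota1 -(perm_mem P0).
pose g w := if x <= w < x + n then f1 (w - x + 1) else if w < x then f0 w else f0 (w - n + 1).
exists g; split; first exact: gen_comp.
  exact: comp_labels.
have Hy : Hyps (s1 n x) f0 g x U0.
  split.
  - by rewrite (perm_uniq P0) iota_uniq.
  - by move=> a b _ _; apply: s1_inj.
  - by apply: sub_in2 I0 => z; rewrite inE => /orP [/eqP ->|].
  - move=> y My Ny; have : 1 <= y <= m by rewrite -mem_iota1 -(perm_mem P0).
    rewrite /g /s1 => Hy; case: (ltnP x y) => Hxy.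
      have -> : (x <= y + n - 1 < x + n) = false by lia.
      have -> : (y + n - 1 < x) = false by lia.
      congr f0; lia.
    have -> : (x <= y < x + n) = false by lia.
    by have -> : (y < x) = true by lia.
rewrite compE.
have -> : OP x (relabel (fun y => if x < y then y + n - 1 else y) U0) (relabel (fun y => y + x - 1) U1)
   = OP (s1 n x x) (relabel (s1 n x) U0) (relabel (s2 x) U1) by rewrite /s1 ltnn.
rewrite (OP_relabel _ Hy) relabel_comp.
have -> : relabel (g \o s2 x) U1 = relabel f1 U1.
  apply: eq_in_relabel => z Mz; have : 1 <= z <= n by rewrite -mem_iota1 -(perm_mem P1).
  rewrite /= /g /s2 => Hz; have -> : (x <= z + x - 1 < x + n) = true by lia.
  congr f1; lia.
exact: OP_teq.
Qed.


Definition Good T := exists n U f, [/\ Gen n U, perm_eq (labels U) (iota 1 n), 0 < n & teq T (relabel f U)].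

Lemma uniq_map_inj (f : nat -> nat) s : uniq (map f s) -> {in s &, injective f}.
Proof.
elim: s => //= a s IH /andP [Na U] u v; rewrite !inE.
move=> /orP [/eqP ->|Hu] /orP [/eqP ->|Hv] // E.
- by move: Na; rewrite E (map_f f Hv).
- by move: Na; rewrite -E (map_f f Hu).
- exact: IH.
Qed.

Lemma good_OP T T0 T1 h : Good T0 -> Good T1 -> uniq (labels T0) -> h \in labels T0 ->
  teq T (OP h T0 T1) -> Good T.
Proof.
move=> [n0 [U0 [f0 [G0 P0 Hn0 E0]]]] [n1 [U1 [f1 [G1 P1 Hn1 E1]]]] U Mh HT.
have PL : perm_eq (labels T0) (map f0 (labels U0)) by rewrite -labels_relabel; exact: teq_labels.
have I0 : {in labels U0 &, injective f0} by apply: uniq_map_inj; rewrite -(perm_uniq PL).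
have [x Mx Ex] : exists2 x, x \in labels U0 & h = f0 x by apply/mapP; rewrite -(perm_mem PL).
have [g [G P E]] := comp_step G0 P0 G1 P1 Hn1 I0 Mx E0 E1.
exists (n0 + n1 - 1), (comp n1 x U0 U1), g; split => //; first lia.
by apply: teq_trans HT _; rewrite Ex.
Qed.

Lemma good_leaf a : Good (Node [:: a] [::]).
Proof. by exists 1, unit_tree, (fun _ => a); split => //; [exact: gen_unit | exact: teq_refl]. Qed.

Lemma good_mu a b : Good (Node [:: a; b] [::]).
Proof.
by exists 2, A_mu, (fun y => if y == 1 then a else b); split => //; [exact: gen_mu | exact: teq_refl].
Qed.

Lemma good_prec a b : Good (Node [:: a] [:: Node [:: b] [::]]).
Proof.
by exists 2, A_prec, (fun y => if y == 1 then a else b); split => //; [exact: gen_prec | exact: teq_refl].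
Qed.

Lemma good_odot a b : Good (Node [::] [:: Node [:: a] [::]; Node [:: b] [::]]).
Proof.
by exists 2, A_odot, (fun y => if y == 1 then a else b); split => //; [exact: gen_odot | exact: teq_refl].
Qed.

Fixpoint sz (T : rwtree) : nat := let: Node L cs := T in (size L + sumn (map sz cs)).+1.

Lemma pick_has (p : pred rwtree) cs : has p cs -> exists c rest, Permutation cs (c :: rest) /\ p c.
Proof.
elim: cs => //= c cs IH; case Pc: (p c) => /=; first by move=> _; exists c, cs; split.
move/IH => [d [rest [H1 H2]]]; exists d, (c :: rest); split => //.
by apply: Permutation_trans (perm_skip c H1) _; constructor.
Qed.

Lemma sumn_Perm (F : rwtree -> nat) cs ds : Permutation cs ds -> sumn (map F cs) = sumn (map F ds).
Proof. elim=> //= [x l l' _ ->|x y l|l l' l'' _ -> _ ->] //; lia. Qed.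

Lemma size_Perm (cs ds : seq rwtree) : Permutation cs ds -> size cs = size ds.
Proof. by elim=> //= [x l l' _ ->|l l' l'' _ -> _ ->]. Qed.

Lemma leq_sumn_mem y s : y \in s -> y <= sumn s.
Proof. elim: s => //= a s IH; rewrite inE => /orP [/eqP ->|/IH]; lia. Qed.

Lemma sz_pos c : 0 < sz c.
Proof. by case: c. Qed.

Lemma sz_big c : wf_empty c -> leafl c = None -> 2 < sz c.
Proof.
case: c => L cs Hw Hl; case: cs Hw Hl => [|d cs] Hw Hl.
  by case: L Hw Hl => [|a [|b l]] //=; lia.
have := sz_pos d; case: L Hw Hl => [|a l] /=; last lia.
case: cs => [|e cs] /=; first by [].
by have := sz_pos e; lia.
Qed.

Lemma labels_Perm L cs ds : Permutation cs ds -> perm_eq (labels (Node L cs)) (labels (Node L ds)).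
Proof. by move=> H /=; rewrite perm_cat2l; exact: perm_flatten_Perm. Qed.


Definition big (c : rwtree) := (leafl c == None) && ~~ is_red c.

Lemma all_leafs cs : ~~ has big cs -> ~~ has is_red cs -> all (fun c => leafl c != None) cs.
Proof.
elim: cs => //= c cs IH; rewrite !negb_or => /andP [H1 H2] /andP [H3 H4]; rewrite IH // andbT.
by move: H1 H3; rewrite /big; case: (leafl c) => //=; rewrite negbK => ->.
Qed.

Lemma teq_perm_children L cs ds : Permutation cs ds -> teq (Node L cs) (Node L ds).
Proof.
move=> H; apply/teq_nodeE; split; first exact: seq.perm_refl.
exists ds; split => //; apply: Forall2_refl => *; exact: teq_refl.
Qed.

Lemma uniq_replace (h : nat) L X F : uniq (L ++ X ++ F) -> h \notin (L ++ X ++ F) -> uniq (L ++ h :: F).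
Proof.
move=> U N; rewrite -cat1s uniq_catCA /=; apply/andP; split.
  by apply: contra N; rewrite !mem_cat => /orP [->|->]; rewrite ?orbT.
by move: U; rewrite uniq_catCA cat_uniq => /and3P [].
Qed.

Lemma uniq_drop (L X F : seq nat) : uniq (L ++ X ++ F) -> uniq (L ++ F).
Proof. by rewrite uniq_catCA cat_uniq => /and3P []. Qed.

Lemma uniq_sub (L X F : seq nat) : uniq (L ++ X ++ F) -> uniq X.
Proof. by rewrite uniq_catCA cat_uniq => /and3P []. Qed.

Lemma leafl_cons (h : nat) L rest : leafl (Node (h :: L) rest) = Some h -> L = [::] /\ rest = [::].
Proof. by case: L; case: rest. Qed.

Lemma red_leafs s : all (fun c => leafl c != None) s -> is_red (Node [::] s).
Proof.
rewrite /is_red eqxx /=; elim: s => //= c s IH /andP [Hc Hs]; rewrite IH // andbT.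
by case: c Hc => [[|? ?] ?].
Qed.

Lemma main k : forall T, sz T < k -> wf_empty T -> uniq (labels T) -> Good T.
Proof.
elim: k => // k IH [L cs] Hsz Hw U.
have [h Fh] : exists h, h \notin labels (Node L cs).
  by exists (sumn (labels (Node L cs))).+1; apply/negP => /leq_sumn_mem; lia.
move: Hw => /= /andP [Hne Hall].
case Hb1: (has big cs).
  have [[Lc cc] [rest [Hp Hc]]] := pick_has Hb1.
  have := all_Perm wf_empty Hp; rewrite Hall /= => /esym /andP [Wc Wr].
  have PL := labels_Perm L Hp.
  have U' : uniq (L ++ labels (Node Lc cc) ++ flatten (map labels rest)) by rewrite -(perm_uniq PL).
  have Fh' : h \notin (L ++ labels (Node Lc cc) ++ flatten (map labels rest)) by rewrite -(perm_mem PL).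
  have Szc := @sz_big (Node Lc cc) Wc (eqP (andP Hc).1).
  have Hs : sz (Node L cs) = (size L + (sz (Node Lc cc) + sumn (map sz rest))).+1.
    by rewrite /= (sumn_Perm sz Hp).
  have UT0 : uniq (labels (Node L (Node [:: h] [::] :: rest))) by rewrite /=; exact: uniq_replace U' Fh'.
  apply: (good_OP (T0 := Node L (Node [:: h] [::] :: rest)) (T1 := Node Lc cc) (h := h)).
  - apply: IH => //=; first by move: Hsz Szc; rewrite Hs /=; clear; lia.
    by move: Hne; rewrite (size_Perm Hp) /= Wr andbT.
  - apply: IH => //; first by move: Hsz Szc; rewrite Hs /=; clear; lia.
    exact: uniq_sub U'.
  - exact: UT0.
  - by rewrite /= mem_cat inE eqxx orbT.
  - rewrite OP_nred; last by case/andP: Hc.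
    have HL : (h \in L) = false by apply/negbTE; apply: contra Fh'; rewrite mem_cat => ->.
    rewrite /= HL inE eqxx /=.
    have -> : map (insertW h Lc cc) rest = rest.
      rewrite -[RHS]map_id; apply: map_ext_In => d Hd; apply: insertW_id.
      by apply: contra Fh' => Hy; rewrite !mem_cat (In_sub Hd Hy) !orbT.
    exact: teq_perm_children.
case Hb2: (has is_red cs).
  have [[Lc cc] [rest [Hp Hc]]] := pick_has Hb2.
  have := all_Perm wf_empty Hp; rewrite Hall /= => /esym /andP [Wc Wr].
  have PL := labels_Perm L Hp.
  have U' : uniq (L ++ labels (Node Lc cc) ++ flatten (map labels rest)) by rewrite -(perm_uniq PL).
  have Fh' : h \notin (L ++ labels (Node Lc cc) ++ flatten (map labels rest)) by rewrite -(perm_mem PL).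
  have Lc0 : Lc = [::] by move: Hc => /= /andP [/eqP].
  have Szc : 2 < sz (Node Lc cc) by apply: sz_big => //; rewrite Lc0.
  have Hs : sz (Node L cs) = (size L + (sz (Node Lc cc) + sumn (map sz rest))).+1.
    by rewrite /= (sumn_Perm sz Hp).
  have UT0 : uniq (labels (Node (h :: L) rest)).
    by have := uniq_replace U' Fh'; rewrite -cat1s uniq_catCA.
  apply: (good_OP (T0 := Node (h :: L) rest) (T1 := Node Lc cc) (h := h)).
  - apply: IH => //=; first by move: Hsz Szc; rewrite Hs /=; clear; lia.
  - apply: IH => //; first by move: Hsz Szc; rewrite Hs /=; clear; lia.
    exact: uniq_sub U'.
  - exact: UT0.
  - by rewrite /= inE eqxx.
  - rewrite OP_red //.
    have -> : (leafl (Node (h :: L) rest) == Some h) = false.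
      case E: (leafl (Node (h :: L) rest) == Some h) => //.
      move/eqP/leafl_cons: E => [EL ER]; rewrite EL ER in Hne Hp.
      by move: Hne; rewrite (size_Perm Hp).
    rewrite insertR_node inE eqxx /= eqxx.
    apply: teq_perm_children; apply: Permutation_trans Hp _; exact: Permutation_cons_append.
have Hl := all_leafs (negbT Hb1) (negbT Hb2).
case: cs Hne Hall U Hsz Fh Hl {Hb1 Hb2} => [|c rest] Hne Hall U Hsz Fh Hl.
  case: L Hne U Hsz Fh => [|a [|b l]] // _ U Hsz Fh; first exact: good_leaf.
  apply: (good_OP (T0 := Node [:: a; h] [::]) (T1 := Node (b :: l) [::]) (h := h)).
  - exact: good_mu.
  - apply: IH => //=; try (by move: Hsz => /=; clear; lia).
    by move: U => /= /andP [].
  - by rewrite /= inE andbT; apply: contra Fh => /eqP ->; rewrite /= !inE eqxx.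
  - by rewrite /= !inE eqxx orbT.
  - rewrite OP_nred //= !inE eqxx orbT /=.
    have -> : (a == h) = false by apply/negbTE; apply: contra Fh => /eqP <-; rewrite /= inE eqxx.
    exact: teq_refl.
move: Hl => /= /andP [Lc Hl].
case Ec: (leafl c) Lc => [b|] // _; move/leafl_labels: Ec => Ec; subst c.
move: Hall => /= Wr.
case: L Hne U Hsz Fh => [|a L'] Hne U Hsz Fh.
  case: rest Hne U Hsz Fh Hl Wr => [|c2 rest] // _ U Hsz Fh Hl Wr.
  move: Hl => /= /andP [Lc2 Hl].
  case Ec: (leafl c2) Lc2 => [b2|] // _; move/leafl_labels: Ec => Ec; subst c2.
  case: rest U Hsz Fh Hl Wr => [|c3 rest] U Hsz Fh Hl Wr; first exact: good_odot.
  apply: (good_OP (T0 := Node [::] [:: Node [:: b] [::]; Node [:: h] [::]])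
                  (T1 := Node [::] (Node [:: b2] [::] :: c3 :: rest)) (h := h)).
  - exact: good_odot.
  - apply: IH => //=; try (by move: Hsz => /=; clear; lia).
    by move: U => /= /andP [].
  - by rewrite /= inE andbT; apply: contra Fh => /eqP ->; rewrite /= !inE eqxx.
  - by rewrite /= !inE eqxx orbT.
  - have R : is_red (Node [::] (Node [:: b2] [::] :: c3 :: rest)).
      by apply: red_leafs; exact: Hl.
    rewrite OP_red //=.
    have Nb : (b == h) = false by apply/negbTE; apply: contra Fh => /eqP <-; rewrite /= inE eqxx.
    have Nh : (h \in [:: b]) = false by rewrite inE eq_sym Nb.
    rewrite Nb Nh /= eqxx cats0; exact: teq_refl.
have U0 : uniq (labels (Node (a :: L') rest)).
  have : uniq ((a :: L') ++ [:: b] ++ flatten (map labels rest)) by exact: U.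
  by move/uniq_drop.
apply: (good_OP (T0 := Node (a :: L') rest) (T1 := Node [:: a] [:: Node [:: b] [::]]) (h := a)).
- by apply: IH => //=; try (by move: Hsz => /=; clear; lia).
- exact: good_prec.
- exact: U0.
- by rewrite /= inE eqxx.
- rewrite OP_nred //= inE !eqxx /=.
  apply/teq_nodeE; split; first by rewrite -cat1s perm_catC.
  exists (rest ++ [:: Node [:: b] [::]]); split; first exact: Permutation_cons_append.
  apply: Forall2_refl => *; exact: teq_refl.
Qed.


Theorem mainTheorem15 :
  forall (n : nat) (T : rwtree), is_rw n T -> exists T', Gen n T' /\ teq T T'.
Proof.
move=> n T /andP [P W].
have U : uniq (labels T) by rewrite (perm_uniq P) iota_uniq.
have [n' [U0 [f [G P0 Hn E]]]] := main (ltnSn (sz T)) W U.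
have PL : perm_eq (labels T) (map f (labels U0)) by rewrite -labels_relabel; exact: teq_labels.
have En : n' = n.
  by have := perm_size PL; rewrite size_map (perm_size P0) (perm_size P) !size_iota.
subst n'.
pose s := map f (iota 1 n).
have Ps : perm_eq s (iota 1 n).
  apply: seq.perm_trans _ P; rewrite perm_sym; apply: seq.perm_trans PL _; exact: perm_map.
exists (act s U0); split; first exact: gen_act.
have -> : act s U0 = relabel f U0.
  rewrite /act; apply: eq_in_relabel => y My.
  have : y \in iota 1 n by rewrite -(perm_mem P0).
  rewrite mem_iota => Hy; rewrite /s (nth_map 0); last by rewrite size_iota; lia.
  rewrite nth_iota; [congr f; lia | lia].
exact: E.
Qed.
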